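(* Let $m\in\mathbb N$ and $\lambda\in X^+_{m+\infty}$, and let $\lambda^\natural\in X^+_{m|\infty}$ be as defined below. Then: (1) the degree of J-atypicality of $\lambda$ equals the degree of atypicality of $\lambda^\natural$; (2) $\lambda$ is J-typical if and only if $\lambda^\natural$ is typical.
   Context: $I(m|\infty)=\{-m,\dots,-1\}\cup\{1,2,\dots\}$. $X^+_{m+\infty}$ is the set of $\lambda=\sum_{i\in I(m|\infty)}\lambda_i\delta'_i$, $\lambda_i\in\mathbb Z$, with $\lambda_{-m}\ge\cdots\ge\lambda_{-1}$, $\lambda_1\ge\lambda_2\ge\cdots$ and $\lambda_i=0$ for $i\gg0$ (so $(\lambda_1,\lambda_2,\dots)$ is a partition); $X^+_{m|\infty}$ is defined likewise with symbols $\delta_i$. For $\lambda\in X^+_{m+\infty}$, let $(\lambda'_1,\lambda'_2,\dots)$ be the conjugate partition of $(\lambda_1,\lambda_2,\dots)$ and $\lambda^\natural=\sum_{i=-m}^{-1}\lambda_i\delta_i+\sum_{j\ge1}\lambda'_j\delta_j$. Super side: $(\delta_i|\delta_j)=-\mathrm{sgn}(i)\delta_{ij}$, $\rho=-\sum_i i\delta_i$. The degree of atypicality of $\mu\in X^+_{m|\infty}$ is the number of $i\in\{-m,\dots,-1\}$ such that $(\mu+\rho|\delta_i-\delta_j)=0$ for some $j>0$; $\mu$ is typical if it is $0$. Reductive side: $(\delta'_i|\delta'_j)_c=\delta_{ij}$, $\rho_c=-\sum_{i<0}i\delta'_i+\sum_{j>0}(1-j)\delta'_j$, and $f_\lambda:I(m|\infty)\to\mathbb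 Z$, $f_\lambda(i)=(\lambda+\rho_c|\delta'_i)_c$. For $f:I(m|\infty)\to\mathbb Z$ injective on negative indices and on positive indices, a pair $(i|j)$ with $i<0<j$ is an atypical pair if $f(i)>f(j)$, $f(i)\ne f(k)$ for all $k>0$ and $f(l)\ne f(j)$ for all $l<0$; its distance is $f(i)-f(j)$. Two pairs are disjoint if they share neither first nor second entry. Recursively for $k\ge1$ let $\Sigma^k_f$ be the set of atypical pairs of distance $k$ disjoint from all pairs in $\Sigma^1_f\cup\cdots\cup\Sigma^{k-1}_f$, and $\Sigma^+_f=\bigcup_k\Sigma^k_f$. The degree of J-atypicality of $\lambda$ is $|\Sigma^+_{f_\lambda}|$. The Bruhat ordering on functions $I(m|\infty)\to\mathbb Z$ is the transitive closure of $f<f\cdot\tau_{ij}$ for $i<j$ with $f(i)<f(j)$ ($(f\cdot\tau)(k)=f(\tau(k))$, $\tau_{ij}$ a transposition); $\lambda$ is J-typical if $f_\lambda$ is minimal in this ordering among $\{f_\mu:\mu\in X^+_{m+\infty}\}$. *)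

(* Defs.v *)
From Stdlib Require Import Relations.
From mathcomp Require Import all_boot all_order all_algebra.
Set Implicit Arguments. Unset Strict Implicit. Unset Printing Implicit Defensive.
Import Order.TTheory GRing.Theory Num.Theory.
Local Open Scope ring_scope.

Definition negI (m : nat) (i : int) : bool := (- (m%:Z) <= i) && (i <= -1).
Definition posI (i : int) : bool := 1 <= i.
Definition inI (m : nat) (i : int) : bool := negI m i || posI i.

(* A weight  sum_i lambda_i delta_i  is encoded as a pair (a, p):
   a = [:: lambda_{-m}; ...; lambda_{-1}]  and  p = [:: lambda_1; lambda_2; ...]
   (the coefficients lambda_j, j > size p, being 0).  The same encoding is used
   for X^+_{m+oo} (symbols delta'_i) and X^+_{m|oo} (symbols delta_i). *)
Definition wt := (seq int * seq nat)%type.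

Definition wval (m : nat) (w : wt) (i : int) : int :=
  if i < 0 then nth 0 w.1 (m - absz i)%N else (nth 0%N w.2 (absz i).-1)%:Z.

Definition dominant (m : nat) (w : wt) : bool :=
  [&& size w.1 == m, sorted (fun x y : int => y <= x) w.1 & sorted geq w.2].

Definition conj_part (p : seq nat) : seq nat :=
  [seq count (fun x => (j <= x)%N) p | j <- iota 1 (foldr maxn 0%N p)].

Definition natural (w : wt) : wt := (w.1, conj_part w.2).

Definition card_is (T : eqType) (P : T -> Prop) (n : nat) : Prop :=
  exists s : seq T, [/\ uniq s, (forall x, x \in s <-> P x) & size s = n].

(* rho = - sum_i i delta_i (coefficient at delta_i) *)
Definition rho_s (i : int) : int := - i.
(* (x | delta_i) where x = sum_k x_k delta_k and (delta_i|delta_j) = -sgn(i) delta_ij *)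
Definition form_delta (x : int -> int) (i : int) : int := - sgz i * x i.

Definition atyp_set (m : nat) (mu : wt) (i : int) : Prop :=
  negI m i /\ exists j : int, posI j /\
    form_delta (fun k => wval m mu k + rho_s k) i
    - form_delta (fun k => wval m mu k + rho_s k) j = 0.

Definition typical (m : nat) (mu : wt) : Prop := card_is (atyp_set m mu) 0.

(* rho_c = - sum_{i<0} i delta'_i + sum_{j>0} (1-j) delta'_j *)
Definition rho_c (i : int) : int := if i < 0 then - i else 1 - i.
(* f_lambda(i) = (lambda + rho_c | delta'_i)_c *)
Definition f_ (m : nat) (w : wt) (i : int) : int := wval m w i + rho_c i.

Definition atyp_pair (m : nat) (f : int -> int) (p : int * int) : Prop :=
  [/\ negI m p.1, posI p.2, f p.2 < f p.1,
      (forall k, posI k -> f p.1 != f k) &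
      (forall l, negI m l -> f l != f p.2)].

Definition dist (f : int -> int) (p : int * int) : int := f p.1 - f p.2.

Definition pdisjoint (p q : int * int) : Prop := p.1 != q.1 /\ p.2 != q.2.

(* SigmaUpto m f n = Sigma^1_f u ... u Sigma^n_f *)
Fixpoint SigmaUpto (m : nat) (f : int -> int) (n : nat) : int * int -> Prop :=
  match n with
  | 0 => fun _ => False
  | n'.+1 => fun p => SigmaUpto m f n' p \/
      (atyp_pair m f p /\ dist f p = n'.+1%:Z /\
       forall q, SigmaUpto m f n' q -> pdisjoint p q)
  end.

Definition SigmaPlus (m : nat) (f : int -> int) (p : int * int) : Prop :=
  exists n, SigmaUpto m f n p.

Definition tau (i j k : int) : int := if k == i then j else if k == j then i else k.

Definition bruhat_step (m : nat) (f g : int -> int) : Prop :=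
  exists i j, [/\ inI m i, inI m j, i < j, f i < f j &
                 forall k, inI m k -> g k = f (tau i j k)].

Definition bruhat_lt (m : nat) : relation (int -> int) := clos_trans _ (bruhat_step m).

Definition J_typical (m : nat) (lam : wt) : Prop :=
  ~ exists mu : wt, dominant m mu /\ bruhat_lt m (f_ m mu) (f_ m lam).

(* Main.v *)
Require Import Defs.
From Stdlib Require Import Relations Classical.
From mathcomp Require Import all_boot all_order all_algebra zify.
Set Implicit Arguments. Unset Strict Implicit. Unset Printing Implicit Defensive.
Import Order.TTheory GRing.Theory Num.Theory.
Local Open Scope ring_scope.

Ltac ulia := unfold inI, negI, posI in *; lia.

Definition good (m S : nat) (f : int -> int) : Prop :=
  [/\ (forall x, negI m x -> negI m (x+1) -> f (x+1) < f x),
      (forall x, 1 <= x -> f (x+1) < f x),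
      (forall x, 1 <= x -> 1 - x <= f x) &
      (forall x, S%:Z < x -> f x = 1 - x)].

Lemma good_neg m S f : good m S f ->
  forall x y, negI m x -> negI m y -> x < y -> f y < f x.
Proof.
move=> [hn _ _ _] x y hx hy hxy.
have [n ey] : exists n : nat, y = x + n%:Z + 1 by exists (`|y - x| - 1)%N; ulia.
subst y; elim: n hy {hxy} => [|n IH] hy.
  by rewrite addr0; apply: hn => //; move: hy; rewrite addr0.
have -> : x + n.+1%:Z + 1 = (x + n%:Z + 1) + 1 by ulia.
apply: lt_trans (IH _); first by apply: hn; ulia.
ulia.
Qed.

Lemma good_pos m S f : good m S f ->
  forall x y, 1 <= x -> x < y -> f y < f x.
Proof.
move=> [_ hp _ _] x y hx hxy.
have [n ey] : exists n : nat, y = x + n%:Z + 1 by exists (`|y - x| - 1)%N; ulia.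
subst y; elim: n {hxy} => [|n IH].
  by rewrite addr0; apply: hp.
have -> : x + n.+1%:Z + 1 = (x + n%:Z + 1) + 1 by ulia.
apply: lt_trans IH; apply: hp; ulia.
Qed.

Lemma good_neg_le m S f : good m S f ->
  forall x y, negI m x -> negI m y -> x <= y -> f y <= f x.
Proof.
move=> g x y hx hy; rewrite le_eqVlt => /orP[/eqP->//|h].
exact/ltW/(good_neg g).
Qed.

Lemma good_pos_inj m S f : good m S f -> forall x y, 1 <= x -> 1 <= y -> f x = f y -> x = y.
Proof.
move=> g x y hx hy e; case: (ltgtP x y) => // h.
  by have := good_pos g hx h; rewrite e ltxx.
by have := good_pos g hy h; rewrite e ltxx.
Qed.

Lemma good_neg_inj m S f : good m S f -> forall x y, negI m x -> negI m y -> f x = f y -> x = y.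
Proof.
move=> g x y hx hy e; case: (ltgtP x y) => // h.
  by have := good_neg g hx hy h; rewrite e ltxx.
by have := good_neg g hy hx h; rewrite e ltxx.
Qed.

Lemma inI_cases m x : inI m x ->
  (exists K : nat, (K < m)%N /\ x = K%:Z - m%:Z) \/ (exists I : nat, x = I.+1%:Z).
Proof.
rewrite /inI /negI /posI => /orP[/andP[h1 h2]|h].
  left; exists (absz (x + m%:Z)); split; ulia.
right; exists ((absz x).-1); ulia.
Qed.

Lemma f_neg m (lam : wt) (K : nat) : (K < m)%N ->
  f_ m lam (K%:Z - m%:Z) = nth 0 lam.1 K - (K%:Z - m%:Z).
Proof.
move=> hK; rewrite /f_ /wval /rho_c.
have -> : (K%:Z - m%:Z < 0) = true by ulia.
have -> : (m - `|K%:Z - m%:Z|)%N = K by ulia.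
by [].
Qed.

Lemma f_pos m (lam : wt) (I : nat) :
  f_ m lam (I.+1%:Z) = (nth 0%N lam.2 I)%:Z - I%:Z.
Proof.
rewrite /f_ /wval /rho_c /=.
simpl; ulia.
Qed.

Lemma nth_geq (p : seq nat) : sorted geq p -> forall i j, (i <= j)%N -> (nth 0 p j <= nth 0 p i)%N.
Proof.
move=> sp i j hij.
case: (ltnP j (size p)) => hj; last by rewrite nth_default.
have tr : transitive geq by move=> a b c h1 h2; apply: leq_trans h2 h1.
have rf : reflexive geq by move=> a; apply: leqnn.
have := sorted_leq_nth tr rf 0%N sp; apply => //; rewrite inE //.
exact: leq_ltn_trans hj.
Qed.

Lemma nth_geqZ (a : seq int) : sorted (fun x y : int => y <= x) a ->
  forall i j, (j < size a)%N -> (i <= j)%N -> nth 0 a j <= nth 0 a i.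
Proof.
move=> sp i j hj hij.
have tr : transitive (fun x y : int => y <= x) by move=> x y z h1 h2; apply: le_trans h2 h1.
have rf : reflexive (fun x y : int => y <= x) by move=> x; apply: lexx.
have := sorted_leq_nth tr rf 0 sp; apply => //; rewrite inE //.
exact: leq_ltn_trans hj.
Qed.

Lemma dominant_good m lam : dominant m lam -> good m (size lam.2) (f_ m lam).
Proof.
case/and3P => /eqP hs sa sp; split.
- move=> x hx hx1.
  have [K [hK ex]] : exists K : nat, (K.+1 < m)%N /\ x = K%:Z - m%:Z.
    exists (absz (x + m%:Z)); split; ulia.
  subst x.
  have -> : K%:Z - m%:Z + 1 = K.+1%:Z - m%:Z by ulia.
  rewrite !f_neg //; last by ulia.
  have := nth_geqZ sa (_ : (K.+1 < size lam.1)%N) (leqnSn K).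
  rewrite hs => h; have {}h := h hK; ulia.
- move=> x hx.
  have [I ex] : exists I : nat, x = I.+1%:Z by exists ((absz x).-1); ulia.
  subst x. have -> : I.+1%:Z + 1 = I.+2%:Z by ulia.
  rewrite !f_pos; have := nth_geq sp (leqnSn I); ulia.
- move=> x hx.
  have [I ex] : exists I : nat, x = I.+1%:Z by exists ((absz x).-1); ulia.
  subst x; rewrite f_pos; ulia.
- move=> x hx.
  have [I ex] : exists I : nat, x = I.+1%:Z by exists ((absz x).-1); ulia.
  subst x; rewrite f_pos nth_default; ulia.
Qed.

Lemma sorted_map_iota (T : Type) (r : rel T) (F : nat -> T) n : forall a,
  (forall k, (a <= k)%N -> (k.+1 < a + n)%N -> r (F k) (F k.+1)) ->
  sorted r [seq F k | k <- iota a n].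
Proof.
elim: n => [//|[|n] IH] a h; first by [].
rewrite /= -/(sorted r (F a.+1 :: [seq F k | k <- iota a.+2 n])).
have -> : (F a.+1 :: [seq F k | k <- iota a.+2 n]) = [seq F k | k <- iota a.+1 n.+1] by [].
rewrite (h a) ?leqnn //=; last by lia.
apply: IH => k hk hk2; apply: h; lia.
Qed.

Lemma good_dominant m S g : good m S g ->
  exists mu, dominant m mu /\ forall x, inI m x -> f_ m mu x = g x.
Proof.
move=> gd; have [hn hp hl hh] := gd.
exists ([seq g (K%:Z - m%:Z) + (K%:Z - m%:Z) | K <- iota 0 m],
        [seq absz (g (ii.+1%:Z) + ii%:Z) | ii <- iota 0 S]); split.
  apply/and3P; split.
  - by rewrite /= size_map size_iota.
  - apply: sorted_map_iota => k _ hk.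
    have := hn (k%:Z - m%:Z) (_ : _) (_ : _).
    have -> : k%:Z - m%:Z + 1 = k.+1%:Z - m%:Z by ulia.
    move=> h; have {}h := h _ _; ulia.
  - apply: sorted_map_iota => k _ hk.
    have := hp (k.+1%:Z) (_ : _).
    have -> : k.+1%:Z + 1 = k.+2%:Z by ulia.
    have := hl k.+1%:Z; have := hl k.+2%:Z.
    move=> h1 h2 h3; have {}h1 := h1 isT; have {}h2 := h2 isT; have {}h3 := h3 isT.
    rewrite /geq; ulia.
move=> x /inI_cases [[K [hK ->]]|[ii ->]].
  rewrite f_neg // /= (nth_map 0%N) ?size_iota // nth_iota // add0n; ulia.
rewrite f_pos /=.
case: (ltnP ii S) => hI.
  rewrite (nth_map 0%N) ?size_iota // nth_iota // add0n.
  have := hl ii.+1%:Z isT; ulia.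
rewrite nth_default ?size_map ?size_iota //.
rewrite hh; ulia.
Qed.

Lemma le_foldr_max (p : seq nat) x : x \in p -> (x <= foldr maxn 0 p)%N.
Proof.
elim: p => [//|a p IH]; rewrite inE => /orP[/eqP->|h] /=.
  by rewrite leq_maxl.
exact: leq_trans (IH h) (leq_maxr _ _).
Qed.

Lemma conj_nth p n : nth 0%N (conj_part p) n = count (fun x => n.+1 <= x)%N p.
Proof.
rewrite /conj_part.
case: (ltnP n (foldr maxn 0 p)) => h.
  by rewrite (nth_map 0%N) ?size_iota // nth_iota // add1n.
rewrite nth_default ?size_map ?size_iota //.
apply/esym/eqP; rewrite -leqn0 leqNgt -has_count; apply/hasP => -[x hx].
by move=> hnx; have := le_foldr_max hx; rewrite leqNgt (leq_ltn_trans h hnx).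
Qed.

Lemma count_nth (p : seq nat) : sorted geq p -> forall n J, (0 < J)%N ->
  (n < count (fun x => J <= x) p)%N = (J <= nth 0 p n)%N.
Proof.
elim: p => [|a p IH] sp n J hJ /=; first by rewrite nth_nil; lia.
have sp' : sorted geq p by case: p sp {IH} => //= b p /andP[].
have hall : all (fun x => x <= a)%N p.
  have tr : transitive geq by move=> x y z h1 h2; apply: leq_trans h2 h1.
  by have := sp; rewrite /= (path_sortedE tr) => /andP[].
case: (leqP J a) => hJa.
  case: n => [|n] /=; first by rewrite hJa.
  by rewrite add1n ltnS IH.
have -> : count (fun x => (J <= x)%N) p = 0%N.
  apply/eqP; rewrite -leqn0 leqNgt -has_count; apply/hasP => -[x hx hJx].
  by move: hJx; rewrite leqNgt (leq_ltn_trans (allP hall x hx) hJa).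
case: n => [|n] /=; first by lia.
apply/esym/negbTE; rewrite -ltnNge.
case: (ltnP n (size p)) => hn; last by rewrite nth_default //.
exact: leq_ltn_trans (allP hall _ (mem_nth 0%N hn)) hJa.
Qed.

Lemma conj_disj (p : seq nat) : sorted geq p -> forall n J, (0 < J)%N ->
  (nth 0%N p n)%:Z - n%:Z != J%:Z - (count (fun x => J <= x)%N p)%:Z.
Proof.
move=> sp n J hJ.
have := count_nth sp n hJ.
case: (leqP J (nth 0%N p n)) => h1 h2; lia.
Qed.

Lemma conj_cover (p : seq nat) : sorted geq p -> forall x : int,
  (forall n, (nth 0%N p n)%:Z - n%:Z != x) ->
  exists J, (0 < J)%N /\ x = J%:Z - (count (fun y => J <= y)%N p)%:Z.
Proof.
move=> sp x hx.
have ex : exists n, (nth 0%N p n)%:Z - n%:Z < x.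
  exists (size p + absz x + 1)%N; rewrite nth_default; lia.
case: (ex_minnP ex) => I0 hI0 hmin.
have [J eJ] : exists J : nat, J%:Z = x + I0%:Z by exists (absz (x + I0%:Z)); lia.
have hJ : (0 < J)%N by lia.
have e := count_nth sp I0 hJ.
have h1 : ~~ (I0 < count (fun y => J <= y) p)%N by rewrite e; lia.
have h2 : (I0 <= count (fun y => J <= y) p)%N.
  case: I0 hI0 hmin e h1 hJ eJ => [//|n] hI0 hmin e h1 hJ eJ.
  have hn : ~~ ((nth 0%N p n)%:Z - n%:Z < x).
    by apply/negP => /hmin; lia.
  have := hx n.
  have := count_nth sp n hJ.
  move=> e2 hne.
  have : (n < count (fun y => J <= y) p)%N by rewrite e2; lia.
  lia.
exists (J); split => //; lia.
Qed.

Lemma atyp_iff m lam : dominant m lam -> forall i,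
  atyp_set m (natural lam) i <->
  (negI m i /\ forall k, posI k -> f_ m lam i != f_ m lam k).
Proof.
case/and3P => _ _ sp i.
set X := (fun k => wval m (natural lam) k + rho_s k).
have fi : negI m i -> form_delta X i = f_ m lam i.
  move=> hi; have hi0 : i < 0 by ulia.
  rewrite /form_delta /X /f_ /rho_c /rho_s /wval /= ltr0_sgz // hi0; lia.
have fj : forall J : nat, form_delta X (J.+1%:Z) =
    J.+1%:Z - (count (fun y => J.+1 <= y)%N lam.2)%:Z.
  move=> J; rewrite /form_delta /X /rho_s /wval gtr0_sgz //=.
  rewrite conj_nth; lia.
split.
  case=> hi [j [hj e]]; split => // k hk.
  have [n ->] : exists n : nat, k = n.+1%:Z by exists ((absz k).-1); ulia.
  have [J ej] : exists J : nat, j = J.+1%:Z by exists ((absz j).-1); ulia.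
  subst j; rewrite fj fi // in e.
  rewrite f_pos.
  have := conj_disj sp n (ltn0Sn J); lia.
case=> hi hk; split => //.
have [J [hJ e]] : exists J, (0 < J)%N /\ f_ m lam i = J%:Z - (count (fun y => J <= y)%N lam.2)%:Z.
  apply: conj_cover => // n; have := hk n.+1%:Z isT; rewrite f_pos eq_sym //.
exists J%:Z; split; first by ulia.
have -> : J%:Z = (J.-1).+1%:Z by lia.
rewrite fj fi //; have -> : (J.-1).+1 = J by lia.
lia.
Qed.

Definition Atyp m (f : int -> int) i := negI m i /\ forall k, posI k -> f i != f k.

Definition negs (m : nat) : seq int := [seq K%:Z - m%:Z | K <- iota 0 m].

Lemma mem_negs m x : (x \in negs m) = negI m x.
Proof.
apply/mapP/idP => [[K hK ->]|h].
  by move: hK; rewrite mem_iota; ulia.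
exists (absz (x + m%:Z)); last by ulia.
rewrite mem_iota; ulia.
Qed.

Lemma uniq_negs m : uniq (negs m).
Proof.
rewrite map_inj_uniq ?iota_uniq // => a b; lia.
Qed.

Lemma size_negs m : size (negs m) = m.
Proof. by rewrite size_map size_iota. Qed.

Lemma sig_atyp m f n p : SigmaUpto m f n p -> atyp_pair m f p.
Proof. by elim: n p => [//|n IH] p /= [/IH|[]]. Qed.

Lemma sig_mono m f n k p : SigmaUpto m f n p -> SigmaUpto m f (n + k) p.
Proof. by elim: k => [|k IH]; rewrite ?addn0 // addnS => h; left; apply: IH. Qed.

Lemma sig_fst_inj m S f : good m S f -> forall n p q,
  SigmaUpto m f n p -> SigmaUpto m f n q -> p.1 = q.1 -> p = q.
Proof.
move=> gd; elim=> [//|n IH] [p1 p2] [q1 q2] /= hp hq e; subst q1.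
case: hp => [hp|[ap [dp djp]]]; case: hq => [hq|[aq [dq djq]]].
- exact: IH.
- by case: (djq _ hp) => /=; rewrite eqxx.
- by case: (djp _ hq) => /=; rewrite eqxx.
- case: ap => /= _ hp2 _ _ _; case: aq => /= _ hq2 _ _ _.
  rewrite /dist /= in dp dq.
  have : f p2 = f q2 by lia.
  move/(good_pos_inj gd); rewrite /posI in hp2 hq2 => -> //.
Qed.

Lemma sigp_fst_inj m S f : good m S f -> forall p q,
  SigmaPlus m f p -> SigmaPlus m f q -> p.1 = q.1 -> p = q.
Proof.
move=> gd p q [a hp] [b hq].
apply: (sig_fst_inj gd (n := maxn a b)).
  by rewrite -(subnKC (leq_maxl a b)); apply: sig_mono.
by rewrite -(subnKC (leq_maxr a b)); apply: sig_mono.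
Qed.

Lemma sig_list m S f : good m S f -> forall L : seq int, uniq L ->
  exists s, uniq s /\ forall q, q \in s <-> (SigmaPlus m f q /\ q.1 \in L).
Proof.
move=> gd; elim=> [|x L IH] /=.
  by move=> _; exists [::]; split => // q; split => // -[].
case/andP => hx /IH [s [us hs]].
case: (classic (exists q, SigmaPlus m f q /\ q.1 = x)) => [[q [hq eq]]|hn].
  exists (q :: s); split.
    rewrite /= us andbT; apply/negP => /hs [_]; by rewrite eq (negbTE hx).
  move=> q'; rewrite inE; split.
    case/orP => [/eqP->|/hs [h1 h2]]; first by rewrite eq inE eqxx.
    by rewrite inE h2 orbT.
  case=> h1; rewrite inE => /orP[/eqP e|h2].
    by rewrite (sigp_fst_inj gd h1 hq) ?eqxx // e eq.
  by apply/orP; right; apply/hs.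
exists s; split => // q'; split.
  by move/hs => [h1 h2]; rewrite inE h2 orbT.
case=> h1; rewrite inE => /orP[/eqP e|h2]; last by apply/hs.
by case: hn; exists q'.
Qed.

Lemma sig_all m S f : good m S f ->
  exists s, [/\ uniq s, (forall q, q \in s <-> SigmaPlus m f q),
             uniq (map fst s) & (size s <= m)%N].
Proof.
move=> gd; have [s [us hs]] := sig_list gd (uniq_negs m).
have hs' : forall q, q \in s <-> SigmaPlus m f q.
  move=> q; split; first by case/hs.
  move=> h; apply/hs; split => //; rewrite mem_negs.
  by case: h => n /sig_atyp [].
have uf : uniq (map fst s).
  rewrite map_inj_in_uniq // => p q hp hq; apply: (sigp_fst_inj gd); exact/hs'.
exists s; split => //.
rewrite -(size_map fst) -(size_negs m); apply: uniq_leq_size => // x.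
by case/mapP => q /hs [_ h] ->.
Qed.

Lemma sig_surj m S f : good m S f -> forall i, Atyp m f i ->
  exists q, SigmaPlus m f q /\ q.1 = i.
Proof.
move=> gd i hi; apply: NNPP => hn.
have [hnn hpp hl hh] := gd.
have [s [us hs uf hsz]] := sig_all gd.
case: (hi) => hineg hipos.
have hm1 : negI m (-1) by ulia.
pose M := Order.min (- S%:Z) (Order.min (f (-1) - 1) (f i - 1)).
have hM1 : M <= - S%:Z by rewrite /M; lia.
have hM2 : M <= f (-1) - 1 by rewrite /M; lia.
have hM3 : M <= f i - 1 by rewrite /M; lia.
clearbody M.
pose j (k : nat) := 1 - (M - k%:Z).
have hj : forall k : nat, j k \in map snd s.
  move=> k.
  have hjS : S%:Z < j k by rewrite /j; lia.
  have fj : f (j k) = M - k%:Z by rewrite hh // /j; lia.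
  have [n en] : exists n : nat, f i - (M - k%:Z) = n.+1%:Z by exists ((absz (f i - (M - k%:Z))%R).-1); lia.
  have ap : atyp_pair m f (i, j k).
    split => //=; first by rewrite /posI /j; lia.
      by rewrite fj; lia.
    move=> l hl0; rewrite fj.
    have h : f (-1) <= f l by apply: (good_neg_le gd hl0 hm1); ulia.
    apply/eqP => e; lia.
  have nsig : ~ SigmaUpto m f n.+1 (i, j k).
    by move=> h; apply: hn; exists (i, j k); split => //; exists n.+1.
  have : ~ forall q, SigmaUpto m f n q -> pdisjoint (i, j k) q.
    move=> h; apply: nsig; right; split => //; split => //.
    by rewrite /dist fj.
  move/not_all_ex_not => [q hq'].
  have [hq hnd] := imply_to_and _ _ hq'.
  have qs : q \in s by apply/hs; exists n.
  apply/mapP; exists q => //.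
  case: (eqVneq (j k) q.2) => // ne; exfalso; apply: hnd; split => //=.
  apply/eqP => e; apply: hn; exists q; split; last by [].
  by exists n.
have : (size [seq j k | k <- iota 0 m.+1] <= size (map snd s))%N.
  apply: uniq_leq_size; last by move=> x /mapP [k _ ->].
  rewrite map_inj_uniq ?iota_uniq // => a b; rewrite /j; lia.
rewrite !size_map size_iota => h; move: (leq_trans h hsz); by rewrite ltnn.
Qed.

Lemma part1 m S f : good m S f ->
  exists s : seq (int * int), [/\ uniq s, (forall q, q \in s <-> SigmaPlus m f q),
     uniq (map fst s) & (forall x, x \in map fst s <-> Atyp m f x)].
Proof.
move=> gd; have [s [us hs uf hsz]] := sig_all gd.
exists s; split => //; move=> x; split.
  move=> /mapP [q hq ->]; have [n /sig_atyp [h1 _ _ h2 _]] := iffLR (hs q) hq.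
  by split => // k hk; apply: h2.
move/(sig_surj gd) => [q [hq <-]]; apply/mapP; exists q => //; exact/hs.
Qed.

Definition swapn (i j0 : int) (n : nat) (F : int -> int) (x : int) : int :=
  if (i <= x) && (x < i + n%:Z) then F (x - i + j0)
  else if (j0 <= x) && (x < j0 + n%:Z) then F (x - j0 + i) else F x.

Lemma tau_l i j : tau i j i = j.
Proof. by rewrite /tau eqxx. Qed.
Lemma tau_r i j : tau i j j = i.
Proof. by rewrite /tau; case: eqP => [->|_]; rewrite ?eqxx. Qed.
Lemma tau_o i j k : k != i -> k != j -> tau i j k = k.
Proof. by rewrite /tau => /negbTE-> /negbTE->. Qed.

Ltac brute := unfold swapn;
  repeat (case: ifP; intro); try (congr (_ _); ulia); try ulia.

Lemma chain m F i j0 n : 1 <= j0 ->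
  (forall k : nat, (k <= n)%N -> negI m (i + k%:Z) /\ F (i + k%:Z) < F (j0 + k%:Z)) ->
  forall G, (forall x, inI m x -> G x = swapn i j0 n.+1 F x) -> bruhat_lt m F G.
Proof.
move=> hj0; elim: n => [|n IH] hk G hG.
  have [hi hF] := hk 0%N (leqnn 0); rewrite !addr0 in hi hF.
  rewrite /bruhat_lt; apply: t_step; exists i, j0; split => //; try ulia.
  move=> x hx; rewrite hG //.
  case: (eqVneq x i) => [->|h1]; first by rewrite tau_l; brute.
  case: (eqVneq x j0) => [->|h2]; first by rewrite tau_r; brute.
  rewrite tau_o //; move/eqP: h1; move/eqP: h2 => h2 h1; brute.
have [hi hF] := hk n.+1 (leqnn _).
have [hi0 _] := hk 0%N isT; rewrite addr0 in hi0.
rewrite /bruhat_lt; apply: t_trans (IH _ _ _) _.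
- by move=> k hkn; apply: hk; apply: leq_trans hkn _.
- by move=> x _; reflexivity.
rewrite /bruhat_lt; apply: t_step; exists (i + n.+1%:Z), (j0 + n.+1%:Z); split => //; try ulia.
  have e1 : swapn i j0 n.+1 F (i + n.+1%:Z) = F (i + n.+1%:Z) by brute.
  have e2 : swapn i j0 n.+1 F (j0 + n.+1%:Z) = F (j0 + n.+1%:Z) by brute.
  by rewrite e1 e2.
move=> x hx; rewrite hG //.
case: (eqVneq x (i + n.+1%:Z)) => [->|h1]; first by rewrite tau_l; brute.
case: (eqVneq x (j0 + n.+1%:Z)) => [->|h2]; first by rewrite tau_r; brute.
rewrite tau_o //; move/eqP: h1; move/eqP: h2 => h2 h1; brute.
Qed.

Lemma least_ex (P : nat -> Prop) n : P n -> exists k, P k /\ forall l, (l < k)%N -> ~ P l.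
Proof.
elim/ltn_ind: n => n IH Pn.
case: (classic (exists l, (l < n)%N /\ P l)) => [[l [hl Pl]]|h].
  exact: IH hl Pl.
by exists n; split => // l hl Pl; apply: h; exists l.
Qed.

Section Construct.
Variables (m S : nat) (f : int -> int).
Hypothesis gd : good m S f.
Variables (i j0 : int) (r : nat).
Hypothesis hatyp : Atyp m f i.
Hypothesis hmax : forall i', Atyp m f i' -> i' <= i.
Hypothesis hj0 : 1 <= j0.
Hypothesis hv : f j0 < f i.
Hypothesis hj0min : forall j, 1 <= j -> j < j0 -> f i <= f j.
Hypothesis hr : forall k : nat, (k < r)%N -> i + k%:Z + 1 <= -1 /\ f (i + k%:Z + 1) = f (j0 + k%:Z).
Hypothesis hr2 : i + r%:Z + 1 <= -1 -> f (i + r%:Z + 1) != f (j0 + r%:Z).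

Let g := swapn i j0 r.+1 f.

Lemma hi : negI m i. Proof. by case: hatyp. Qed.

Lemma hir : i + r%:Z <= -1.
Proof.
case: r hr => [|r'] h; first by have := hi; ulia.
have := (h r' (ltnSn _)).1; lia.
Qed.

Lemma hj0lt : forall j, 1 <= j -> j < j0 -> f i < f j.
Proof.
move=> j h1 h2; have := hj0min h1 h2; rewrite le_eqVlt => /orP[/eqP e|//].
by case: hatyp => _ /(_ j); rewrite /posI e eqxx => /(_ h1).
Qed.

Lemma g1 x y : i <= x <= i + r%:Z -> y = x - i + j0 -> g x = f y.
Proof. by move=> h ->; rewrite /g /swapn; have -> : (i <= x) && (x < i + r.+1%:Z) = true by lia. Qed.

Lemma g2 x y : j0 <= x <= j0 + r%:Z -> y = x - j0 + i -> g x = f y.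
Proof.
move=> h ->; have := hir => hh; rewrite /g /swapn.
have -> : (i <= x) && (x < i + r.+1%:Z) = false by lia.
by have -> : (j0 <= x) && (x < j0 + r.+1%:Z) = true by lia.
Qed.

Lemma g3 x : ~~ ((i <= x) && (x <= i + r%:Z)) -> ~~ ((j0 <= x) && (x <= j0 + r%:Z)) -> g x = f x.
Proof.
move=> h1 h2; rewrite /g /swapn.
have -> : (i <= x) && (x < i + r.+1%:Z) = false by lia.
by have -> : (j0 <= x) && (x < j0 + r.+1%:Z) = false by lia.
Qed.

Lemma key k : (k <= r)%N -> f (j0 + k%:Z) < f (i + k%:Z).
Proof.
case: k => [|k] hk; first by rewrite !addr0.
have [_ e] := hr hk.
have -> : i + k.+1%:Z = i + k%:Z + 1 by lia.
rewrite e; apply: (good_pos gd); lia.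
Qed.

Lemma key2 : i + r%:Z + 1 <= -1 -> f (i + r%:Z + 1) < f (j0 + r%:Z).
Proof.
move=> h; have ne := hr2 h.
case: (ltgtP (f (i + r%:Z + 1)) (f (j0 + r%:Z))) => // [lt|eq]; last by rewrite eq eqxx in ne.
exfalso.
have ineg : negI m (i + r%:Z + 1) by have := hi; ulia.
have y1 : f (i + r%:Z + 1) < f (i + r%:Z).
  apply: (good_neg gd) => //; try ulia; have := hi; ulia.
have y2 : f (i + r%:Z) <= f i.
  apply: (good_neg_le gd); try ulia; have := hi; have := hir; ulia.
suff : Atyp m f (i + r%:Z + 1) by move/hmax; lia.
split => // k hk; apply/eqP => e.
have [c1|[c2|[c3|c4]]] : k < j0 \/ (j0 <= k /\ k < j0 + r%:Z) \/ k = j0 + r%:Z \/ j0 + r%:Z < k by lia.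
- have := hj0lt (_ : 1 <= k) c1; rewrite /posI in hk; move/(_ hk) => h3; lia.
- case: r hr c2 y1 y2 e lt ne h ineg => [|r'] hr' c2 y1 y2 e lt ne h ineg; first by lia.
  have [_ e2] := hr' r' (ltnSn _).
  have e3 : i + r'.+1%:Z = i + r'%:Z + 1 by lia.
  have e4 : f (i + r'.+1%:Z) = f (j0 + r'%:Z) by rewrite e3.
  have : f (j0 + r'%:Z) <= f k.
    case: (eqVneq k (j0 + r'%:Z)) => [->//|nk].
    apply/ltW/(good_pos gd); rewrite /posI in hk; lia.
  lia.
- by move: ne; rewrite e c3 eqxx.
- have h1 : 1 <= j0 + r%:Z by lia.
  have := good_pos gd h1 c4; lia.
Qed.

Lemma hineg : - m%:Z <= i. Proof. by have := hi; ulia. Qed.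

Lemma g_good : good m (S + absz j0 + r + 1) g.
Proof.
have hir' := hir; have hin := hineg.
split.
- move=> x hx hx1.
  have [c|[c|[c|[c|c]]]] : x + 1 < i \/ x + 1 = i \/ (i <= x /\ x + 1 <= i + r%:Z)
      \/ x = i + r%:Z \/ i + r%:Z < x by lia.
  + rewrite !g3; try ulia. apply: (good_neg gd) => //; lia.
  + rewrite (@g3 x); try ulia. rewrite (@g1 (x + 1) j0); try ulia.
    have := good_neg gd hx hi (_ : x < i); have := hv; lia.
  + rewrite (@g1 x (x - i + j0)); try ulia. rewrite (@g1 (x + 1) (x - i + j0 + 1)); try ulia.
    apply: (good_pos gd); lia.
  + rewrite (@g1 x (j0 + r%:Z)); try ulia. rewrite (@g3 (x + 1)); try ulia.
    have := key2; rewrite -c; move=> h; apply: h; ulia.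
  + rewrite !g3; try ulia. apply: (good_neg gd) => //; lia.
- move=> x hx.
  have [c|[c|[c|[c|c]]]] : x + 1 < j0 \/ x + 1 = j0 \/ (j0 <= x /\ x + 1 <= j0 + r%:Z)
      \/ x = j0 + r%:Z \/ j0 + r%:Z < x by lia.
  + rewrite !g3; try ulia. apply: (good_pos gd) => //; lia.
  + rewrite (@g3 x); try ulia. rewrite (@g2 (x + 1) i); try ulia.
    apply: hj0lt => //; lia.
  + rewrite (@g2 x (x - j0 + i)); try ulia. rewrite (@g2 (x + 1) (x - j0 + i + 1)); try ulia.
    apply: (good_neg gd); ulia.
  + rewrite (@g2 x (i + r%:Z)); try ulia. rewrite (@g3 (x + 1)); try ulia.
    have := key (leqnn r); rewrite -c => h.
    have := good_pos gd (_ : 1 <= x) (_ : x < x + 1); lia.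
  + rewrite !g3; try ulia. apply: (good_pos gd) => //; lia.
- move=> x hx.
  case: (boolP ((j0 <= x) && (x <= j0 + r%:Z))) => c.
    have [k ek] : exists k : nat, j0 + k%:Z = x by exists (absz (x - j0)); lia.
    have hk : (k <= r)%N by lia.
    rewrite (@g2 x (i + k%:Z)); try ulia.
    have := key hk; rewrite ek.
    case: gd => _ _ hl _; have := hl x hx; lia.
  rewrite (@g3 x); try ulia. by case: gd => _ _ hl _; apply: hl.
- move=> x hx; rewrite (@g3 x); try ulia.
  by case: gd => _ _ _ hh; apply: hh; lia.
Qed.

Lemma g_chain k : (k <= r)%N -> negI m (i + k%:Z) /\ g (i + k%:Z) < g (j0 + k%:Z).
Proof.
move=> hk; have hir' := hir; have hin := hineg.
split; first by ulia.
rewrite (@g1 (i + k%:Z) (j0 + k%:Z)); try ulia.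
rewrite (@g2 (j0 + k%:Z) (i + k%:Z)); try ulia.
exact: key.
Qed.

Lemma g_inv x : swapn i j0 r.+1 g x = f x.
Proof.
have hir' := hir; rewrite /g; unfold swapn.
repeat (case: ifP; intro); try (congr (_ _); lia); try lia.
Qed.

End Construct.

Lemma construct m S f : good m S f -> (exists i, Atyp m f i) ->
  exists i j0 (r : nat), [/\ 1 <= j0, good m (S + absz j0 + r + 1) (swapn i j0 r.+1 f),
     (forall k : nat, (k <= r)%N -> negI m (i + k%:Z) /\
         swapn i j0 r.+1 f (i + k%:Z) < swapn i j0 r.+1 f (j0 + k%:Z)) &
     (forall x, swapn i j0 r.+1 (swapn i j0 r.+1 f) x = f x)].
Proof.
move=> gd [i1 hi1].
have [n [Pn nmin]] : exists n, Atyp m f (- n%:Z) /\ forall l, (l < n)%N -> ~ Atyp m f (- l%:Z).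
  apply: (@least_ex (fun n => Atyp m f (- n%:Z)) (absz i1)).
  have -> : - (absz i1)%:Z = i1 by case: hi1; ulia.
  exact: hi1.
set i := - n%:Z.
have hmax : forall i', Atyp m f i' -> i' <= i.
  move=> i' hi'; case: (lerP i' i) => // lt; exfalso.
  apply: (nmin (absz i')); first by case: hi'; rewrite /i; ulia.
  have -> : - (absz i')%:Z = i' by case: hi'; ulia.
  exact: hi'.
have [n0 [[Q1 Q2] n0min]] : exists n0, ((0 < n0)%N /\ f n0%:Z < f i) /\
    forall l, (l < n0)%N -> ~ ((0 < l)%N /\ f l%:Z < f i).
  apply: (@least_ex (fun n0 => (0 < n0)%N /\ f n0%:Z < f i) (S + absz (f i) + 2)).
  split; first by lia.
  case: gd => _ _ _ hh; rewrite hh; lia.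
set j0 := n0%:Z.
have hj0 : 1 <= j0 by rewrite /j0; lia.
have hj0min : forall j, 1 <= j -> j < j0 -> f i <= f j.
  move=> j h1 h2; case: (lerP (f i) (f j)) => // lt; exfalso.
  apply: (n0min (absz j)); first by rewrite /j0 in h2; lia.
  have -> : (absz j)%:Z = j by lia.
  split => //; lia.
have hineg : negI m i by case: Pn.
have [r [Rr rmin]] : exists r : nat, ~ (i + r%:Z + 1 <= -1 /\ f (i + r%:Z + 1) = f (j0 + r%:Z)) /\
    forall l, (l < r)%N -> ~ ~ (i + l%:Z + 1 <= -1 /\ f (i + l%:Z + 1) = f (j0 + l%:Z)).
  apply: (@least_ex (fun r : nat => ~ (i + r%:Z + 1 <= -1 /\ f (i + r%:Z + 1) = f (j0 + r%:Z)))
          (absz i - 1)).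
  by case; ulia.
have hr : forall k : nat, (k < r)%N -> i + k%:Z + 1 <= -1 /\ f (i + k%:Z + 1) = f (j0 + k%:Z).
  by move=> k hk; apply: NNPP; apply: rmin.
have hr2 : i + r%:Z + 1 <= -1 -> f (i + r%:Z + 1) != f (j0 + r%:Z).
  by move=> h; apply/eqP => e; apply: Rr.
have hv : f j0 < f i by [].
exists i, j0, r; split => //.
- exact: (g_good gd Pn hmax hj0 hv hj0min hr hr2).
- by move=> k hk; apply: (g_chain gd Pn hj0 hv hr hr2 hk).
- by move=> x; apply: (g_inv Pn hj0 hv hr hr2 x).
Qed.

Definition posc (c : nat) : seq int := [seq (k.+1)%:Z | k <- iota 0 c].
Definition W m c := negs m ++ posc c.
Definition Phi m c (F : int -> int) : int := \sum_(k <- W m c) k * F k.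
Definition cntge (x : int) (s : seq int) : nat := count (fun y => x <= y) s.

Lemma mem_posc c x : (x \in posc c) = (1 <= x) && (x <= c%:Z).
Proof.
apply/mapP/idP => [[K hK ->]|h].
  by move: hK; rewrite mem_iota; lia.
exists ((absz x).-1); last by lia.
rewrite mem_iota; lia.
Qed.

Lemma uniq_posc c : uniq (posc c).
Proof. rewrite map_inj_uniq ?iota_uniq // => a b; lia. Qed.

Lemma mem_W m c x : (x \in W m c) = negI m x || (1 <= x) && (x <= c%:Z).
Proof. by rewrite mem_cat mem_negs mem_posc. Qed.

Lemma uniq_W m c : uniq (W m c).
Proof.
rewrite cat_uniq uniq_negs uniq_posc andbT /=.
apply/hasP => -[x]; rewrite mem_posc mem_negs; ulia.
Qed.

Lemma W_inI m c x : x \in W m c -> inI m x.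
Proof. rewrite mem_W; ulia. Qed.

Lemma tau_inv i j x : tau i j (tau i j x) = x.
Proof.
case: (eqVneq x i) => [->|h1]; first by rewrite tau_l tau_r.
case: (eqVneq x j) => [->|h2]; first by rewrite tau_r tau_l.
by rewrite !tau_o.
Qed.

Lemma perm_tau (s : seq int) i j : uniq s -> i \in s -> j \in s -> perm_eq s (map (tau i j) s).
Proof.
move=> us hi hj; apply: uniq_perm => //.
  by rewrite (map_inj_uniq (can_inj (@tau_inv i j))).
have tm : forall x, x \in s -> tau i j x \in s.
  move=> x hx; case: (eqVneq x i) => [->|h1]; first by rewrite tau_l.
  case: (eqVneq x j) => [->|h2]; first by rewrite tau_r.
  by rewrite tau_o.
move=> x; apply/idP/mapP => [hx|[y hy ->]]; last exact: tm.
by exists (tau i j x); [apply: tm | rewrite tau_inv].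
Qed.

Lemma sub_in_count' (T : eqType) (s : seq T) (a b : pred T) :
  (forall x, x \in s -> a x -> b x) -> (count a s <= count b s)%N.
Proof.
elim: s => [//|y s IH] h /=; apply: leq_add; last first.
  by apply: IH => x hx; apply: h; rewrite inE hx orbT.
by case: (a y) (h y (mem_head _ _)) => //= ->.
Qed.

Lemma sub_in_count_map (s : seq int) (a : pred int) (F G : int -> int) :
  (forall x, x \in s -> a (F x) -> a (G x)) -> (count a (map F s) <= count a (map G s))%N.
Proof.
elim: s => [//|y s IH] h /=; apply: leq_add; last first.
  by apply: IH => x hx; apply: h; rewrite inE hx orbT.
by case: (a (F y)) (h y (mem_head _ _)) => //= ->.
Qed.

Lemma Phi_split m c (H : int -> int) i j : i \in W m c -> j \in W m c -> i != j ->
  Phi m c H = i * H i + (j * H j + \sum_(k <- W m c | (k != i) && (k != j)) k * H k).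
Proof.
move=> hi hj nij; rewrite /Phi (bigD1_seq i) ?uniq_W //=; congr (_ + _).
rewrite -big_filter (bigD1_seq j) ?filter_uniq ?uniq_W //=; last by rewrite mem_filter eq_sym nij.
by rewrite big_filter_cond.
Qed.

Definition Inv m (F G : int -> int) :=
  (exists C : nat, forall c : nat, (C <= c)%N ->
     perm_eq (map F (W m c)) (map G (W m c)) /\ Phi m c G < Phi m c F) /\
  (forall x, (cntge x (map F (negs m)) <= cntge x (map G (negs m)))%N).

Lemma step_inv m F G : bruhat_step m F G -> Inv m F G.
Proof.
case=> i [j [hi hj hij hF hG]]; split.
  exists (absz j) => c hc.
  have iW : i \in W m c by rewrite mem_W; ulia.
  have jW : j \in W m c by rewrite mem_W; ulia.
  have eG : map G (W m c) = map F (map (tau i j) (W m c)).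
    rewrite -map_comp; apply/eq_in_map => x /W_inI hx; exact: hG.
  split.
    by rewrite eG; apply: perm_map; apply: perm_tau => //; apply: uniq_W.
  have nij : i != j by rewrite lt_eqF.
  rewrite (Phi_split G iW jW nij) (Phi_split F iW jW nij).
  have -> : \sum_(k <- W m c | (k != i) && (k != j)) k * G k =
            \sum_(k <- W m c | (k != i) && (k != j)) k * F k.
    rewrite big_seq_cond [RHS]big_seq_cond; apply: eq_bigr => k /andP[hk /andP[h1 h2]].
    by rewrite hG ?tau_o // (W_inI hk).
  rewrite !hG // tau_l tau_r; nia.
move=> x.
have [jn|[ip|ij]] : j < 0 \/ 0 < i \/ (i < 0 /\ 0 < j) by ulia.
- have eG : map G (negs m) = map F (map (tau i j) (negs m)).
    rewrite -map_comp; apply/eq_in_map => y; rewrite mem_negs => hy; apply: hG; ulia.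
  have iN : i \in negs m by rewrite mem_negs; ulia.
  have jN : j \in negs m by rewrite mem_negs; ulia.
  by rewrite eG /cntge -(permP (perm_map F (perm_tau (uniq_negs m) iN jN))).
- have eG : map G (negs m) = map F (negs m).
    apply/eq_in_map => y; rewrite mem_negs => hy; rewrite hG ?tau_o //; ulia.
  by rewrite eG.
- rewrite /cntge; apply: sub_in_count_map => y; rewrite mem_negs => hy /=.
  rewrite hG; last by ulia.
  case: (eqVneq y i) => [->|h1]; first by rewrite tau_l => h; apply: le_trans h (ltW hF).
  by rewrite tau_o //; apply/eqP => e; move: hy; rewrite e; ulia.
Qed.

Lemma inv_lt m F G : bruhat_lt m F G -> Inv m F G.
Proof.
elim => [x y /step_inv //|x y z _ [[C1 h1] c1] _ [[C2 h2] c2]].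
split; last by move=> t; exact: leq_trans (c1 t) (c2 t).
exists (maxn C1 C2) => c hc.
have [p1 l1] := h1 c (leq_trans (leq_maxl _ _) hc).
have [p2 l2] := h2 c (leq_trans (leq_maxr _ _) hc).
by split; [exact: perm_trans p1 p2 | exact: lt_trans l2 l1].
Qed.

Lemma sorted_N m S f : good m S f -> sorted (fun a b : int => b < a) (map f (negs m)).
Proof.
move=> [hn _ _ _]; rewrite /negs -map_comp; apply: sorted_map_iota => k _ hk /=.
have -> : k.+1%:Z - m%:Z = (k%:Z - m%:Z) + 1 by lia.
apply: hn; ulia.
Qed.

Lemma sorted_P m S f c : good m S f -> sorted (fun a b : int => b < a) (map f (posc c)).
Proof.
move=> [_ hp _ _]; rewrite /posc -map_comp; apply: sorted_map_iota => k _ hk /=.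
have -> : k.+2%:Z = k.+1%:Z + 1 by lia.
apply: hp; lia.
Qed.

Lemma uniq_N m S f : good m S f -> uniq (map f (negs m)).
Proof.
move=> gf; rewrite map_inj_in_uniq ?uniq_negs // => x y hx hy.
by apply: (good_neg_inj gf); rewrite -mem_negs.
Qed.

Lemma uniq_P m S f c : good m S f -> uniq (map f (posc c)).
Proof.
move=> gf; rewrite map_inj_in_uniq ?uniq_posc // => x y; rewrite !mem_posc => hx hy.
apply: (good_pos_inj gf); lia.
Qed.

Lemma cnt_split x s : cntge x s = (cntge (x + 1) s + count (pred1 x) s)%N.
Proof. elim: s => [//|y s IH]; rewrite /cntge /= -!/(cntge _ _) IH.
case E1: (x <= y)%R; case E2: (x + 1 <= y)%R; case E3: (y == x). all: try (move/eqP: E3 => E3). all: simpl. all: try lia. Qed.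

Lemma cnt_eq_mem (s1 s2 : seq int) : uniq s1 -> uniq s2 ->
  (forall x, cntge x s1 = cntge x s2) -> s1 =i s2.
Proof.
move=> u1 u2 h x.
have := h x; rewrite !(cnt_split x) (h (x + 1)) => /addnI.
rewrite -!/(count_mem x _) !count_uniq_mem //.
by case: (x \in s1); case: (x \in s2).
Qed.

Lemma no_lt m Sf Sg f g : good m Sf f -> good m Sg g ->
  (forall i, negI m i -> exists k, posI k /\ f k = f i) -> bruhat_lt m g f -> False.
Proof.
move=> gf gg hty /inv_lt [[C hC] hcnt].
pose c := (C + Sf + absz (f (-1)%R) + 1)%N.
have hCc : (C <= c)%N by rewrite /c; lia.
have [hperm hPhi] := hC c hCc.
set NF := map f (negs m); set NG := map g (negs m).
set PF := map f (posc c); set PG := map g (posc c).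
have tot : forall x, (cntge x NG + cntge x PG = cntge x NF + cntge x PF)%N.
  move=> x; rewrite /cntge -!count_cat /NF /NG /PF /PG -!map_cat.
  by rewrite (permP hperm).
have uNF := uniq_N gf; have uNG := uniq_N gg.
have uPF := uniq_P c gf; have uPG := uniq_P c gg.
have cm : forall (x : int) (s : seq int), uniq s -> count (pred1 x) s = (x \in s) :> nat.
  by move=> x s us; rewrite -/(count_mem x s) count_uniq_mem.
have [X hX] : exists X, forall x, X <= x -> cntge x NF = 0%N /\ cntge x NG = 0%N.
  exists (`|f (- m%:Z)| + `|g (- m%:Z)| + 1)%R => x hx.
  have bnd : forall h S', good m S' h -> forall y, y \in negs m -> h y <= h (- m%:Z).
    move=> h S' gh y; rewrite mem_negs => hy; apply: (good_neg_le gh) => //; ulia.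
  split; apply/eqP; rewrite -leqn0 leqNgt -has_count; apply/hasP => -[z /mapP [y hy ->] hz].
    by have := bnd _ _ gf y hy; lia.
  by have := bnd _ _ gg y hy; lia.
have step : forall y, cntge y NF = cntge y NG -> cntge (y - 1) NF = cntge (y - 1) NG.
  move=> y e.
  have sp : forall s, cntge (y - 1) s = (cntge y s + count (pred1 (y - 1)%R) s)%N.
    by move=> s; rewrite cnt_split subrK.
  have t1 := tot y; have t2 := tot (y - 1).
  have le := hcnt (y - 1).
  rewrite -/NF -/NG !sp !cm // in t2 le *.
  have imp : y - 1 \in NF -> y - 1 \in PF.
    case/mapP => k hk ek.
    have hkn : negI m k by rewrite -mem_negs.
    have [j [hj ej]] := hty k hkn.
    apply/mapP; exists j => //.
      rewrite mem_posc; apply/andP; split => //.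
      have h1 : f (-1) <= f k by apply: (good_neg_le gf); ulia.
      case: (lerP j Sf%:Z) => hjS; first by rewrite /c; lia.
      case: gf => _ _ _ hh; have := hh j hjS; rewrite /c; lia.
    by rewrite ej ek.
  move: imp t1 t2 le; rewrite e.
  case: (y - 1 \in NF); case: (y - 1 \in NG); case: (y - 1 \in PF); case: (y - 1 \in PG);
    move=> /=; lia.
have allB : forall x, cntge x NF = cntge x NG.
  move=> x; case: (lerP X x) => h; first by have [-> ->] := hX x h.
  have [n ->] : exists n : nat, x = X - n%:Z by exists (absz (X - x)); lia.
  elim: n => [|n IH]; first by rewrite subr0; have [-> ->] := hX X (lexx _).
  have -> : X - n.+1%:Z = X - n%:Z - 1 by lia.
  exact: step.
have allP' : forall x, cntge x PF = cntge x PG by move=> x; have := tot x; rewrite allB; lia.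
have tr : transitive (fun a b : int => b < a) by move=> a b d h1 h2; exact: lt_trans h2 h1.
have ir : irreflexive (fun a b : int => b < a) by move=> a; exact: ltxx.
have eN : NF = NG.
  apply: (irr_sorted_eq tr ir); [exact: sorted_N gf | exact: sorted_N gg |].
  exact: cnt_eq_mem.
have eP : PF = PG.
  apply: (irr_sorted_eq tr ir); [exact: sorted_P c gf | exact: sorted_P c gg |].
  exact: cnt_eq_mem.
have eW : map f (W m c) = map g (W m c) by rewrite /W !map_cat -/NF -/NG -/PF -/PG eN eP.
have : Phi m c f = Phi m c g.
  rewrite /Phi; apply: eq_big_seq => k hk; congr (_ * _).
  by move/eq_in_map: eW; apply.
by move=> e; move: hPhi; rewrite e ltxx.
Qed.

Lemma card0 (T : eqType) (P : T -> Prop) : card_is P 0 <-> forall x, ~ P x.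
Proof.
split.
  by case=> -[|a s] [_ h] //= _ x /h.
by move=> h; exists [::]; split => // x; split => // /h.
Qed.

Unset Implicit Arguments.

Theorem theorem6p4 (m : nat) (lam : wt) :
  dominant m lam ->
  (exists d : nat, card_is (SigmaPlus m (f_ m lam)) d /\
                   card_is (atyp_set m (natural lam)) d) /\
  (J_typical m lam <-> typical m (natural lam)).
Proof.
move=> dom; have gf := dominant_good dom.
have [s [us hs uf hm]] := part1 gf.
split.
  exists (size s); split; first by exists s.
  exists (map fst s); split => //; last by rewrite size_map.
  move=> x; split => h; first by apply/(atyp_iff dom); apply/hm.
  by apply/hm; apply/(atyp_iff dom).
split.
  move=> hJ; apply/card0 => x hx.
  have hA : Atyp m (f_ m lam) x by apply/(atyp_iff dom).
  have [i [j0 [r [hj0 gg hch hinv]]]] := construct gf (ex_intro _ x hA).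
  have [mu [dmu hmu]] := good_dominant gg.
  apply: hJ; exists mu; split => //.
  apply: (@chain m (f_ m mu) i j0 r hj0).
    move=> k hk; have [h1 h2] := hch k hk; split => //.
    by rewrite !hmu //; rewrite /inI /negI /posI in h1 *; lia.
  move=> y hy; rewrite -hinv.
  rewrite /swapn.
  case: ifP => c1.
    rewrite hmu //; rewrite /inI /posI; lia.
  case: ifP => c2; last by rewrite hmu.
  have [k ek] : exists k : nat, y - j0 = k%:Z by exists (absz (y - j0)); lia.
  have hk : (k <= r)%N by lia.
  have := (hch k hk).1; have -> : i + k%:Z = y - j0 + i by lia.
  by move=> hn; rewrite hmu // /inI hn.
move=> ht [mu [dmu hlt]].
apply: (no_lt gf (dominant_good dmu) _ hlt) => i hi.
apply: NNPP => hn.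
move/card0: ht => /(_ i); apply; apply/(atyp_iff dom); split => // k hk.
by apply/eqP => e; apply: hn; exists k; split.
Qed.
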